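(* Let $D$ be a finite subset of $\mathbb{N}^d\setminus\{0\}$ that is an antichain with respect to the natural partial order. Consider the collection $\mathcal{C}_D$ of all GNS $S\subseteq\mathbb{N}^d$ with $D\subseteq\mathcal{H}(S)$, ordered by inclusion. Then the maximal members of $\mathcal{C}_D$ are exactly the quasi-irreducible GNS $S$ with $FA(S)=D$.
   Context: $\mathbb{N}=\{0,1,2,\dots\}$. A GNS is a submonoid $S\subseteq\mathbb{N}^d$ with finite complement $\mathcal{H}(S)=\mathbb{N}^d\setminus S$ (gaps). Natural partial order: $x\le y$ iff $x^{(i)}\le y^{(i)}$ for all $i$. A relaxed monomial order is a total order $\prec$ on $\mathbb{N}^d$ with (i) $v\prec w\Rightarrow v\prec w+u$ for all $u\in\mathbb{N}^d$, (ii) $0\prec v$ for all $v\neq0$. A gap is Frobenius allowable if it equals $\max_\prec\mathcal{H}(S)$ for some relaxed monomial order $\prec$; $FA(S)$ is the set of Frobenius allowable gaps. A GNS $S$ is quasi-irreducible if for every $x\in\mathcal{H}(S)$, either $2x\in FA(S)$ or there is $F\in FA(S)$ with $F-x\in S$ (in particular $F-x\in\mathbb{N}^d$). *)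

(* Defs.v *)
From mathcomp Require Import all_boot.
Set Implicit Arguments. Unset Strict Implicit. Unset Printing Implicit Defensive.

Definition vec (d : nat) := {ffun 'I_d -> nat}.

Definition v0 {d : nat} : vec d := [ffun => 0].
Definition vadd {d : nat} (x y : vec d) : vec d := [ffun i => x i + y i].
(* pointwise (truncated) subtraction; only used when y <= x *)
Definition vsub {d : nat} (x y : vec d) : vec d := [ffun i => x i - y i].
Definition vle {d : nat} (x y : vec d) : bool := [forall i, x i <= y i].

(* A generalized numerical semigroup: a submonoid of N^d with finite complement. *)
Definition GNS {d : nat} (S : vec d -> Prop) : Prop :=
  [/\ S v0,
      (forall x y, S x -> S y -> S (vadd x y)) &
      exists gaps : seq (vec d), forall x, ~ S x -> x \in gaps].

Definition relaxed_monomial_order {d : nat} (lt : vec d -> vec d -> Prop) : Prop :=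
  [/\ (forall x, ~ lt x x),
      (forall x y z, lt x y -> lt y z -> lt x z),
      (forall x y, x <> y -> lt x y \/ lt y x),
      (forall v w u, lt v w -> lt v (vadd w u)) &
      (forall v, v <> v0 -> lt v0 v)].

(* F is Frobenius allowable: F = max_lt H(S) for some relaxed monomial order *)
Definition FA {d : nat} (S : vec d -> Prop) (F : vec d) : Prop :=
  ~ S F /\
  exists lt : vec d -> vec d -> Prop,
    relaxed_monomial_order lt /\ (forall h, ~ S h -> h = F \/ lt h F).

Definition quasi_irreducible {d : nat} (S : vec d -> Prop) : Prop :=
  forall x, ~ S x ->
    FA S (vadd x x) \/
    exists F, FA S F /\ vle x F /\ S (vsub F x).

Definition in_CD {d : nat} (D : seq (vec d)) (S : vec d -> Prop) : Prop :=
  GNS S /\ (forall x, x \in D -> ~ S x).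

Definition maximal_in_CD {d : nat} (D : seq (vec d)) (S : vec d -> Prop) : Prop :=
  in_CD D S /\
  forall T, in_CD D T -> (forall x, S x -> T x) -> (forall x, T x -> S x).

(* Main.v *)
Require Import Defs.
From mathcomp Require Import all_boot.
From mathcomp Require Import zify.
From Stdlib Require Import Classical.
Set Implicit Arguments. Unset Strict Implicit. Unset Printing Implicit Defensive.

Ltac vlia := repeat match goal with H : context[@fun_of_fin _ _ _ _ _] |- _ => revert H end;
  repeat match goal with
   | |- context[@fun_of_fin ?T ?F ?P ?f ?i] =>
       let a := fresh "a" in set a := @fun_of_fin T F P f i; clearbody a; cbv beta in a
   end; intros; lia.

Section Vec.
Variable d : nat.
Implicit Types x y z u : vec d.

Lemma vaddE x y i : vadd x y i = x i + y i. Proof. by rewrite ffunE. Qed.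
Lemma vsubE x y i : vsub x y i = x i - y i. Proof. by rewrite ffunE. Qed.
Lemma v0E i : (@v0 d) i = 0. Proof. by rewrite ffunE. Qed.
Lemma vleP x y : reflect (forall i, x i <= y i) (vle x y).
Proof. exact: forallP. Qed.

Lemma vaddC x y : vadd x y = vadd y x.
Proof. apply/ffunP=> i; rewrite !vaddE. vlia. Qed.
Lemma vaddA x y z : vadd x (vadd y z) = vadd (vadd x y) z.
Proof. apply/ffunP=> i; rewrite !vaddE. vlia. Qed.
Lemma vadd0 x : vadd x v0 = x.
Proof. apply/ffunP=> i; rewrite !vaddE v0E; vlia. Qed.
Lemma vle_add x y : vle x (vadd x y).
Proof. apply/vleP=> i; rewrite vaddE; vlia. Qed.
Lemma vle_refl x : vle x x.
Proof. by apply/vleP. Qed.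
Lemma vle_trans x y z : vle x y -> vle y z -> vle x z.
Proof. move=> /vleP H1 /vleP H2; apply/vleP=> i; exact: leq_trans (H1 i) (H2 i). Qed.
Lemma vaddK x F : vle x F -> vadd x (vsub F x) = F.
Proof. move=> /vleP H; apply/ffunP=> i; rewrite vaddE vsubE; have := H i; vlia. Qed.
Lemma vaddKl x s : vsub (vadd x s) x = s.
Proof. apply/ffunP=> i; rewrite vsubE vaddE; vlia. Qed.
Lemma vadd_eq_self x y : vadd x y = x -> y = v0.
Proof.
move=> H; apply/ffunP=> i; have := congr1 (fun f : vec d => f i) H.
rewrite vaddE v0E; vlia.
Qed.
Lemma vadd_eq0 x y : vadd x y = v0 -> y = v0.
Proof.
move=> H; apply/ffunP=> i; have := congr1 (fun f : vec d => f i) H.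
rewrite vaddE !v0E; vlia.
Qed.
Lemma vneq0 x : x <> v0 -> exists i, 0 < x i.
Proof.
move=> H; apply: NNPP => H2; apply: H; apply/ffunP=> i; rewrite v0E.
case: (posnP (x i)) => // Hi; exfalso; apply: H2; by exists i.
Qed.

Definition sz x := \sum_i x i.
Lemma sz_add x y : sz (vadd x y) = sz x + sz y.
Proof. rewrite /sz -big_split /=; apply: eq_bigr => i _; by rewrite vaddE. Qed.
Lemma sz_pos x : x <> v0 -> 0 < sz x.
Proof.
move=> /vneq0 [i Hi]; rewrite /sz (bigD1 i) //=; vlia.
Qed.
Lemma vle_sz x y : vle x y -> x <> y -> sz x < sz y.
Proof.
move=> H Hne; rewrite -(vaddK H) sz_add.
have : vsub y x <> v0 by move=> E; apply: Hne; rewrite -(vaddK H) E vadd0.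
move/sz_pos; vlia.
Qed.
Lemma sz0 : sz (@v0 d) = 0.
Proof. rewrite /sz big1 // => i _; exact: v0E. Qed.

Definition vmul (k : nat) x : vec d := [ffun i => k * x i].
Lemma vmulE k x i : vmul k x i = k * x i. Proof. by rewrite ffunE. Qed.
Lemma vmulD j k x : vadd (vmul j x) (vmul k x) = vmul (j + k) x.
Proof. apply/ffunP=> i; rewrite vaddE !vmulE; vlia. Qed.
Lemma vmul1 x : vmul 1 x = x.
Proof. apply/ffunP=> i; rewrite vmulE; vlia. Qed.
Lemma vmul2 x : vmul 2 x = vadd x x.
Proof. apply/ffunP=> i; rewrite vmulE vaddE; vlia. Qed.
Lemma vmul_le j k x : j <= k -> vle (vmul j x) (vmul k x).
Proof. move=> H; apply/vleP=> i; rewrite !vmulE; exact: leq_mul. Qed.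
Lemma vmul_inj j k x : x <> v0 -> vmul j x = vmul k x -> j = k.
Proof.
move=> /vneq0 [i Hi] E; have := congr1 (fun f : vec d => f i) E.
rewrite !vmulE => /eqP; by rewrite eqn_pmul2r // => /eqP ->.
Qed.
Lemma vmul_neq0 k x : 0 < k -> x <> v0 -> vmul k x <> v0.
Proof.
move=> Hk /vneq0 [i Hi] E; have := congr1 (fun f : vec d => f i) E.
rewrite vmulE v0E; move/eqP; rewrite muln_eq0; vlia.
Qed.

Lemma vsubxx x : vsub x x = v0.
Proof. apply/ffunP=> i; rewrite vsubE v0E; vlia. Qed.
Lemma vsub_shift x s F : vle (vadd x s) F -> vsub F x = vadd (vsub F (vadd x s)) s.
Proof. move=> /vleP H; apply/ffunP=> i; have := H i; rewrite !ffunE; vlia. Qed.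

Lemma FA_maxgap (S : vec d -> Prop) F :
  FA S F -> ~ S F /\ (forall h, ~ S h -> vle F h -> h = F).
Proof.
move=> [nSF [lt [[Hirr Htr Htot Hcomp H0] Hmax]]]; split=> // h nSh Hle.
case: (Hmax h nSh) => // Hlt; exfalso.
have := Hcomp _ _ (vsub h F) Hlt; rewrite vaddK //; exact: Hirr.
Qed.

Lemma maxgap_FA (S : vec d -> Prop) F :
  S v0 -> ~ S F -> (forall h, ~ S h -> vle F h -> h = F) -> FA S F.
Proof.
move=> S0 nSF Hm; split=> //.
pose key z : nat := vle F z.
pose lt x y : bool := (key x < key y) || (key x == key y) &&
   ((sz x < sz y) || (sz x == sz y) && (pickle x < pickle y)).
have keymono : forall w u, key w <= key (vadd w u).
  move=> w u; rewrite /key; case: (boolP (vle F w)) => //= H.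
  by rewrite (vle_trans H (vle_add w u)).
have Fn0 : F <> v0 by move=> E; apply: nSF; rewrite E.
have key0 : key v0 = 0.
  rewrite /key; case: (boolP (vle F v0)) => // /vleP H.
  have [i Hi] := vneq0 Fn0; have := H i; rewrite v0E; lia.
exists (fun x y => lt x y); split; first split.
- move=> x; rewrite /lt; lia.
- move=> x y z; rewrite /lt; lia.
- move=> x y Hne.
  have : pickle x != pickle y by apply/eqP=> /(pcan_inj pickleK).
  rewrite /lt; lia.
- move=> v w u; case: (classic (u = v0)) => [-> | Hu]; first by rewrite vadd0.
  have := sz_pos Hu; have := keymono w u; rewrite /lt sz_add; lia.
- move=> v Hv; have := sz_pos Hv; have := keymono v0 v; rewrite /lt key0 sz0; lia.
- move=> h nSh; case: (classic (h = F)) => [|Hne]; [by left | right].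
  have kF : key F = 1 by rewrite /key vle_refl.
  have kh : key h = 0.
    rewrite /key; case: (boolP (vle F h)) => // H; by case: Hne; apply: Hm.
  rewrite /lt kF kh; lia.
Qed.

Lemma exists_max (S : vec d -> Prop) (P : vec d -> Prop) :
  (exists gaps : seq (vec d), forall x, ~ S x -> x \in gaps) ->
  (forall z, P z -> ~ S z) -> forall z, P z ->
  exists m, [/\ P m, vle z m & forall g, P g -> vle m g -> g = m].
Proof.
move=> [gaps Hg] HP.
set B := \max_(g <- gaps) sz g.
have HB : forall g, P g -> sz g <= B.
  move=> g Pg; exact: (leq_bigmax_seq (P := xpredT) _ (Hg _ (HP _ Pg))).
suff : forall n z, B - sz z <= n -> P z ->
  exists m, [/\ P m, vle z m & forall g, P g -> vle m g -> g = m].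
  by move=> H z Pz; exact: (H _ z (leqnn _) Pz).
elim=> [|n IH] z Hn Pz.
- case: (classic (exists g, [/\ P g, vle z g & g <> z])) => [[g [Pg Hzg Hne]]|Hno].
  + have := vle_sz Hzg (nesym Hne); have := HB _ Pg; lia.
  + exists z; split=> //; first exact: vle_refl.
    move=> g Pg Hzg; apply: NNPP => Hne; apply: Hno; by exists g.
- case: (classic (exists g, [/\ P g, vle z g & g <> z])) => [[g [Pg Hzg Hne]]|Hno].
  + have := vle_sz Hzg (nesym Hne); have := HB _ Pg => H1 H2.
    have [m [Pm Hgm Hmax]] := IH g ltac:(lia) Pg.
    exists m; split=> //; exact: vle_trans Hzg Hgm.
  + exists z; split=> //; first exact: vle_refl.
    move=> g Pg Hzg; apply: NNPP => Hne; apply: Hno; by exists g.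
Qed.

Lemma GNS_union (S Q : vec d -> Prop) :
  GNS S ->
  (forall x y, Q x -> S y -> S (vadd x y) \/ Q (vadd x y)) ->
  (forall x y, Q x -> Q y -> S (vadd x y) \/ Q (vadd x y)) ->
  GNS (fun z => S z \/ Q z).
Proof.
move=> [S0 Sadd [gaps Hg]] H1 H2; split.
- by left.
- move=> x y [Sx|Qx] [Sy|Qy].
  + by left; apply: Sadd.
  + by rewrite vaddC; apply: H1.
  + by apply: H1.
  + by apply: H2.
- exists gaps => x Hx; apply: Hg => Sx; apply: Hx; by left.
Qed.

End Vec.

Theorem theorem3p2 (d : nat) (D : seq (vec d)) :
  v0 \notin D ->
  (forall a b, a \in D -> b \in D -> vle a b -> a = b) ->
  forall S : vec d -> Prop,
    maximal_in_CD D S <->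
    (GNS S /\ quasi_irreducible S /\ (forall x, FA S x <-> x \in D)).
Proof.
move=> D0 Hanti S; split.
- move=> [[HG HD] Hmax].
  have HG' := HG; case: HG' => [S0 Sadd Sfin].
  have Hext : forall Q : vec d -> Prop,
      (forall x y, Q x -> S y -> S (vadd x y) \/ Q (vadd x y)) ->
      (forall x y, Q x -> Q y -> S (vadd x y) \/ Q (vadd x y)) ->
      (forall x, x \in D -> ~ Q x) ->
      forall z, Q z -> S z.
    move=> Q H1 H2 H3 z Qz.
    have := Hmax (fun z => S z \/ Q z); apply.
    + split; first exact: GNS_union.
      move=> x xD [Sx|Qx]; [exact: HD xD Sx | exact: H3 xD Qx].
    + by move=> x Sx; left.
    + by right.
  have Hc : forall m, ~ S m -> (forall h, ~ S h -> vle m h -> h = m) -> m \in D.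
    move=> m nSm Hm; apply: NNPP => mD; apply: (nSm).
    apply: (Hext (fun z => z = m)) => //.
    + move=> x y -> Sy; case: (classic (y = v0)) => [->|Hy]; first by right; rewrite vadd0.
      left; apply: NNPP => H; apply: Hy; apply: (@vadd_eq_self _ m).
      exact: Hm H (vle_add _ _).
    + move=> x y -> ->; left; apply: NNPP => H.
      have E := Hm _ H (vle_add _ _); have := vadd_eq_self E => m0.
      by apply: nSm; rewrite m0.
    + by move=> x xD E; apply: mD; rewrite -E.
  have Hd : forall x, x \in D -> ~ S x /\ (forall h, ~ S h -> vle x h -> h = x).
    move=> x xD; have nSx := HD x xD.
    have [m [nSm Hxm Hm]] := exists_max Sfin (fun z H => H) nSx.
    have mD := Hc m nSm Hm.
    have E := Hanti _ _ xD mD Hxm; subst m; by split.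
  have HFA : forall x, FA S x <-> x \in D.
    move=> x; split.
    + by move/FA_maxgap=> [H1 H2]; apply: Hc.
    + move=> xD; have [H1 H2] := Hd x xD; exact: maxgap_FA.
  split=> //; split=> //.
  move=> x nSx; apply: NNPP => Hn.
  have n2 : (vadd x x) \notin D.
    apply/negP=> H; apply: Hn; left; by apply/HFA.
  have hw : forall F, F \in D -> vle x F -> ~ S (vsub F x).
    move=> F FD Hle HS; apply: Hn; right; exists F; split=> //; by apply/HFA.
  (* Step 1: x is pseudo-Frobenius *)
  have [y [[s0 [Ss0 Ey nSy]] Hxy Hy]] := exists_max Sfin
     (P := fun z => exists s, [/\ S s, z = vadd x s & ~ S z])
     (fun z H => let: ex_intro s (And3 _ _ H) := H in H)
     (ex_intro _ v0 (And3 S0 (esym (vadd0 x)) nSx)).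
  have PFy : forall s, S s -> s <> v0 -> S (vadd y s).
    move=> s Ss Hs; apply: NNPP => H; apply: Hs; apply: (@vadd_eq_self _ y).
    apply: Hy (vle_add _ _); exists (vadd s0 s); split=> //; first exact: Sadd.
    by rewrite Ey vaddA.
  have nwy : forall F, F \in D -> vle y F -> ~ S (vsub F y).
    move=> F FD Hle HS; apply: (hw F FD).
    + apply: vle_trans Hle; rewrite Ey; exact: vle_add.
    + rewrite (@vsub_shift _ x s0 F); last by rewrite -Ey.
      by rewrite -Ey; apply: Sadd.
  have yD : y \notin D.
    apply/negP=> yD; apply: (nwy y yD (vle_refl _)); by rewrite vsubxx.
  have n2y : ~ S (vadd y y).
    move=> S2y; apply: nSy; apply: (Hext (fun z => z = y)) => //.
    + move=> a b -> Sb; case: (classic (b = v0)) => [->|Hb]; first by right; rewrite vadd0.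
      by left; apply: PFy.
    + by move=> a b -> ->; left.
    + by move=> a aD E; move: yD; rewrite -E aD.
  have s00 : s0 = v0.
    apply: NNPP => Hs0; apply: nSy.
    have E : vadd y y = y.
      apply: Hy (vle_add _ _); exists (vadd s0 y); split=> //.
      * by rewrite vaddC; apply: PFy.
      * by rewrite {1}Ey -vaddA.
    by rewrite (vadd_eq_self E).
  move: Ey; rewrite s00 vadd0 => Ey; subst y.
  have x0 : x <> v0 by move=> E; apply: nSx; rewrite E.
  have PFk : forall k s, 0 < k -> S s -> s <> v0 -> S (vadd (vmul k x) s).
    elim=> [//|k IH] s _ Ss Hs.
    case: k IH => [_|k IH]; first by rewrite vmul1; apply: PFy.
    rewrite -(vmulD 1 k.+1) vmul1 -vaddA; apply: PFy; first exact: IH.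
    by move/vadd_eq0.
  have key : forall k, (forall j, k < 2 * j -> j != k -> vmul j x \notin D) ->
      forall j, k < 2 * j -> j != k -> S (vmul j x).
    move=> k Hk j Hj Hjk.
    apply: (Hext (fun z => exists j, [/\ k < 2 * j, j != k & z = vmul j x])); last first.
    + by exists j.
    + move=> a aD [i [Hi Hik E]]; move: (Hk i Hi Hik); by rewrite -E aD.
    + move=> a b [i [Hi Hik ->]] [i' [Hi' Hik' ->]]; right; exists (i + i').
      rewrite vmulD; split=> //; lia.
    + move=> a b [i [Hi Hik ->]] Sb; case: (classic (b = v0)) => [->|Hb].
      * by right; exists i; rewrite vadd0.
      * left; apply: PFk => //; lia.
  case: (classic (exists k, vmul k x \in D)) => [[k kD]|Hno].
  + have k0 : k != 0.
      apply/eqP=> E; move: kD; rewrite E.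
      have -> : vmul 0 x = v0 by apply/ffunP=> i; rewrite !ffunE.
      by rewrite (negbTE D0).
    have k1 : k != 1.
      apply/eqP=> E; move: kD; rewrite E vmul1 => xD.
      by apply: (hw x xD (vle_refl _)); rewrite vsubxx.
    have k2 : k != 2 by apply/eqP=> E; move: kD; rewrite E vmul2 (negbTE n2).
    have Sk1 : S (vmul k.-1 x).
      apply: (key k); [|lia|lia]; move=> j Hj Hjk.
      apply/negP=> jD.
      case: (leqP j k) => Hjk2.
      * have := Hanti _ _ jD kD (vmul_le x Hjk2) => /(vmul_inj x0) E.
        by move: Hjk; rewrite E eqxx.
      * have := Hanti _ _ kD jD (vmul_le x (ltnW Hjk2)) => /(vmul_inj x0) E.
        by move: Hjk; rewrite E eqxx.
    apply: (HD _ kD).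
    have -> : k = 1 + k.-1 by lia.
    rewrite -vmulD vmul1; apply: PFy => //.
    apply: vmul_neq0 => //; lia.
  + apply: nSx; rewrite -(vmul1 x); apply: (key 0) => // j _ _.
    by apply/negP=> jD; apply: Hno; exists j.
- move=> [HG [HQ HFA]]; split.
  + split=> // x xD; have := (proj2 (HFA x) xD); by case.
  + move=> T [HGT HDT] Hsub x Tx; apply: NNPP => nSx.
    case: HGT => [T0 Tadd Tfin].
    case: (HQ x nSx) => [H2|[F [HF [Hle HS]]]].
    * exact: (HDT _ (proj1 (HFA _) H2) (Tadd _ _ Tx Tx)).
    * apply: (HDT _ (proj1 (HFA _) HF)); rewrite -(vaddK Hle).
      exact: Tadd _ _ Tx (Hsub _ HS).
Qed.
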